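(* Let $\mathcal M=(\mathbf M^{(\lambda)})_{\lambda>0}$, $\mathbf M^{(\lambda)}=(M^{(\lambda)}_p)_{p\in\mathbb N_0}$, be a weight matrix in dimension $d=1$ such that for every $\lambda>0$: $(M^{(\lambda)}_p)^2\le M^{(\lambda)}_{p-1}M^{(\lambda)}_{p+1}$ for all $p\in\mathbb N$, and $\lim_{p\to\infty}(M^{(\lambda)}_p)^{1/p}=+\infty$. Assume moreover that $\mu^{(\lambda)}_p:=M^{(\lambda)}_p/M^{(\lambda)}_{p-1}$ ($p\in\mathbb N$), $\mu^{(\lambda)}_0:=1$, satisfy $\mu^{(\lambda)}_p\le\mu^{(\kappa)}_p$ for all $p$ whenever $0<\lambda\le\kappa$. Then $\Lambda_{\{\mathcal M\}}$ is nuclear if and only if for every $\lambda>0$ there exist $\kappa\ge\lambda$ and $A\ge1$ with $M^{(\lambda)}_{p+1}\le A^{p+1}M^{(\kappa)}_p$ for all $p\in\mathbb N_0$.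
   Context: A weight matrix (here $d=1$) is a family $(\mathbf M^{(\lambda)})_{\lambda>0}$ of sequences of positive reals $(M^{(\lambda)}_p)_{p\in\mathbb N_0}$ with $M^{(\lambda)}_0=1$ and $M^{(\lambda)}_p\le M^{(\kappa)}_p$ for all $p$ whenever $0<\lambda\le\kappa$. The associated function of $\mathbf M=(M_p)$ is $\omega_{\mathbf M}(t)=\sup_{p\in\mathbb N_0}\log\frac{|t|^p}{M_p}$ (with $0^0=1$). With $\|\mathbf c\|_{\mathbf M,h}:=\sup_{k\in\mathbb N_0}|c_k|e^{\omega_{\mathbf M}(k^{1/2}/h)}$, $\Lambda_{\{\mathcal M\}}$ is the space of sequences $\mathbf c=(c_k)$ with $\|\mathbf c\|_{\mathbf M^{(\lambda)},h}<\infty$ for some $\lambda,h>0$, with the inductive limit topology of the normed spaces $\{\mathbf c:\|\mathbf c\|_{\mathbf M^{(j)},j}<\infty\}$, $j\in\mathbb N$. *)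

(* Defs.v *)
From Stdlib Require Import Reals.
From Coquelicot Require Import Coquelicot.
Open Scope R_scope.

Definition cseq := nat -> C.

Definition wmatrix := R -> nat -> R.

Definition is_weight_matrix (M : wmatrix) : Prop :=
  (forall lam, 0 < lam -> M lam 0%nat = 1) /\
  (forall lam p, 0 < lam -> 0 < M lam p) /\
  (forall lam kap p, 0 < lam -> lam <= kap -> M lam p <= M kap p).

(* exp(omega_M(t)) = sup_p t^p / M_p, with 0^0 = 1 (Stdlib pow has 0^0 = 1).
   [wbound Mseq h c B] states ||c||_{M,h} <= B, i.e.
   sup_k |c_k| exp(omega_M(sqrt k / h)) <= B, written out as a double sup. *)
Definition wbound (Mseq : nat -> R) (h : R) (c : cseq) (B : R) : Prop :=
  forall k p : nat, Cmod (c k) * ((sqrt (INR k) / h) ^ p / Mseq p) <= B.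

Definition inLambda (M : wmatrix) (c : cseq) : Prop :=
  exists lam h B, 0 < lam /\ 0 < h /\ wbound (M lam) h c B.

(* Step j of the inductive limit (j >= 1): ||c||_{M^(j), j} < oo. *)
Definition inStep (M : wmatrix) (j : nat) (c : cseq) : Prop :=
  exists B, wbound (M (INR j)) (INR j) c B.

Definition is_seminorm (M : wmatrix) (q : cseq -> R) : Prop :=
  (forall x, inLambda M x -> 0 <= q x) /\
  (forall x y, inLambda M x -> inLambda M y ->
     q (fun k => Cplus (x k) (y k)) <= q x + q y) /\
  (forall (a : C) x, inLambda M x -> q (fun k => Cmult a (x k)) = Cmod a * q x).

(* Continuity for the (locally convex) inductive limit topology of the normed
   steps: a seminorm is continuous iff its restriction to every step is
   continuous, i.e. q c <= C ||c||_{M^(j),j} on step j. *)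
Definition cont_seminorm (M : wmatrix) (q : cseq -> R) : Prop :=
  is_seminorm M q /\
  forall j : nat, (1 <= j)%nat ->
    exists Cst, forall c B, wbound (M (INR j)) (INR j) c B -> q c <= Cst * B.

Definition is_linear_functional (M : wmatrix) (f : cseq -> C) : Prop :=
  forall (a : C) x y, inLambda M x -> inLambda M y ->
    f (fun k => Cplus (Cmult a (x k)) (y k)) = Cplus (Cmult a (f x)) (f y).

(* Nuclearity of Lambda_{M} (Pietsch): every continuous seminorm p is
   prenuclear, i.e. there are a continuous seminorm q, linear functionals f_n
   and a summable sequence c_n >= 0 with |f_n(x)| <= c_n q(x) and
   p(x) <= sum_n |f_n(x)|. *)
Definition Lambda_nuclear (M : wmatrix) : Prop :=
  forall p, cont_seminorm M p ->
    exists (q : cseq -> R) (f : nat -> cseq -> C) (cn : nat -> R),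
      cont_seminorm M q /\
      (forall n, is_linear_functional M (f n)) /\
      (forall n, 0 <= cn n) /\ ex_series cn /\
      (forall n x, inLambda M x -> Cmod (f n x) <= cn n * q x) /\
      (forall x, inLambda M x ->
         ex_series (fun n => Cmod (f n x)) /\
         p x <= Series (fun n => Cmod (f n x))).

(* Main.v *)
Require Import Defs.
From Stdlib Require Import Reals.
From Coquelicot Require Import Coquelicot.
From Stdlib Require Import Lra Lia Psatz Arith ZArith FunctionalExtensionality ClassicalEpsilon Classical.
Open Scope R_scope.

Definition supS (u : nat -> R) : R :=
  match Sup_seq u with Finite x => x | _ => 0 end.

Lemma sup_ub (u : nat -> R) : (exists B, forall n, u n <= B) -> forall n, u n <= supS u.
Proof.
  intros [B HB] n. unfold supS.
  generalize (Sup_seq_correct u). destruct (Sup_seq u) as [l| |]; simpl; intro H.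
  - destruct (Rle_or_lt (u n) l) as [h|h]; auto.
    assert (He : 0 < u n - l) by lra.
    destruct (H (mkposreal _ He)) as [H1 _]. specialize (H1 n). simpl in H1. lra.
  - destruct (H B) as [m Hm]. simpl in Hm. specialize (HB m). lra.
  - specialize (H (u n) n). simpl in H. lra.
Qed.

Lemma sup_le (u : nat -> R) B : (forall n, u n <= B) -> supS u <= B.
Proof.
  intros HB. unfold supS.
  generalize (Sup_seq_correct u). destruct (Sup_seq u) as [l| |]; simpl; intro H.
  - destruct (Rle_or_lt l B) as [h|h]; auto.
    assert (He : 0 < l - B) by lra.
    destruct (H (mkposreal _ He)) as [_ [m Hm]]. simpl in Hm. specialize (HB m). lra.
  - destruct (H B) as [m Hm]. simpl in Hm. specialize (HB m). lra.
  - specialize (H (u 0%nat) 0%nat). simpl in H. lra.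
Qed.

Fixpoint fsum (a : nat -> R) (N : nat) : R :=
  match N with O => 0 | S n => fsum a n + a n end.

Lemma fsum_nonneg a N : (forall k, 0 <= a k) -> 0 <= fsum a N.
Proof. intros H; induction N; simpl; [lra|]. specialize (H N); lra. Qed.

Lemma fsum_le a b N : (forall k, (k < N)%nat -> a k <= b k) -> fsum a N <= fsum b N.
Proof. induction N; simpl; intros H; [lra|].
  assert (fsum a N <= fsum b N) by (apply IHN; intros; apply H; lia).
  specialize (H N ltac:(lia)); lra. Qed.

Lemma fsum_term a N k : (forall k, 0 <= a k) -> (k < N)%nat -> a k <= fsum a N.
Proof. intros H; induction N; simpl; intros Hk; [lia|].
  destruct (Nat.eq_dec k N) as [->|hn].
  - generalize (fsum_nonneg a N H); lra.
  - specialize (IHN ltac:(lia)); specialize (H N); lra. Qed.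

Lemma fsum_mono a N N' : (forall k, 0 <= a k) -> (N <= N')%nat -> fsum a N <= fsum a N'.
Proof. intros H HN; induction HN; simpl; [lra|]. specialize (H m); lra. Qed.

Lemma fsum_plus a b N : fsum (fun k => a k + b k) N = fsum a N + fsum b N.
Proof. induction N; simpl; lra. Qed.

Lemma fsum_scal c a N : fsum (fun k => c * a k) N = c * fsum a N.
Proof. induction N; simpl; [ring|]. rewrite IHN; ring. Qed.

Lemma fsum_ext a b N : (forall k, (k < N)%nat -> a k = b k) -> fsum a N = fsum b N.
Proof. induction N; simpl; intros H; [lra|]. rewrite IHN by (intros; apply H; lia).
  rewrite H by lia; lra. Qed.

Lemma fsum_sum_f a n : fsum a (S n) = sum_f_R0 a n.
Proof. induction n; simpl; [lra|]. simpl in IHn. rewrite <- IHn. simpl. lra. Qed.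

Lemma Series_ge0 a : (forall n, 0 <= a n) -> 0 <= Series a.
Proof.
  intros H. unfold Series.
  assert (Hs : forall n, 0 <= sum_n a n).
  { intros n. rewrite sum_n_Reals. rewrite <- fsum_sum_f. apply fsum_nonneg; auto. }
  generalize (Lim_seq_le_loc (fun _ => 0) (sum_n a)). rewrite Lim_seq_const.
  intros HH. assert (Hle : Rbar_le 0 (Lim_seq (sum_n a))).
  { apply HH. exists 0%nat. intros; apply Hs. }
  destruct (Lim_seq (sum_n a)); simpl in *; lra.
Qed.

Lemma fsum_le_Series a N : (forall n, 0 <= a n) -> ex_series a -> fsum a N <= Series a.
Proof.
  intros H He. destruct N as [|N]; simpl.
  - apply Series_ge0; auto.
  - rewrite (Series_incr_n a (S N)) by (auto; lia).
    simpl. rewrite <- fsum_sum_f. simpl.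
    generalize (Series_ge0 (fun k => a (S (N + k))) (fun k => H _)). lra.
Qed.

Lemma ex_series_bounded a B : (forall n, 0 <= a n) -> (forall N, fsum a N <= B) -> ex_series a.
Proof.
  intros H HB.
  assert (Hinc : forall n, sum_n a n <= sum_n a (S n)).
  { intros n. rewrite !sum_n_Reals. simpl. specialize (H (S n)). lra. }
  destruct (ex_lim_seq_incr _ Hinc) as [l Hl].
  destruct l as [l| |].
  - exists l. exact Hl.
  - exfalso. apply is_lim_seq_spec in Hl. destruct (Hl B) as [N HN].
    specialize (HN N (le_n _)). rewrite sum_n_Reals, <- fsum_sum_f in HN.
    specialize (HB (S N)). lra.
  - exfalso. apply is_lim_seq_spec in Hl. destruct (Hl 0) as [N HN].
    specialize (HN N (le_n _)). rewrite sum_n_Reals, <- fsum_sum_f in HN.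
    generalize (fsum_nonneg a (S N) H). lra.
Qed.

Lemma ex_series_inv_sq : ex_series (fun n => / (INR n + 1) ^ 2).
Proof.
  apply (ex_series_bounded _ 2).
  - intros n. apply Rlt_le, Rinv_0_lt_compat. apply pow_lt. generalize (pos_INR n); lra.
  - assert (forall N, fsum (fun n => / (INR n + 1) ^ 2) N <= 2 - 2 / (INR N + 1)).
    { induction N; cbn [fsum]. { simpl. lra. }
      rewrite S_INR. generalize (pos_INR N); intros HN.
      assert (/ (INR N + 1) ^ 2 <= 2 / (INR N + 1) - 2 / (INR N + 1 + 1)).
      { replace (2 / (INR N + 1) - 2 / (INR N + 1 + 1)) with (2 / ((INR N + 1) * (INR N + 2))) by (field; lra).
        replace (2 / ((INR N + 1) * (INR N + 2))) with (/ ((INR N + 1) * (INR N + 2) / 2)) by (field; lra).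
        apply Rinv_le_contravar; [nra|]. simpl. nra. }
      lra. }
    intros N. specialize (H N). assert (0 <= 2 / (INR N + 1)).
    { apply Rlt_le, Rdiv_lt_0_compat; [lra|]. generalize (pos_INR N); lra. } lra.
Qed.

Section Weights.
Variable M : wmatrix.
Hypothesis HW : is_weight_matrix M.
Hypothesis Hlim : forall lam, 0 < lam ->
     is_lim_seq (fun p : nat => Rpower (M lam p) (/ INR p)) p_infty.

Lemma Mpos lam p : 0 < lam -> 0 < M lam p.
Proof. intros; destruct HW as [_ [HH _]]; auto. Qed.
Lemma M0 lam : 0 < lam -> M lam 0%nat = 1.
Proof. intros; destruct HW as [HH _]; auto. Qed.
Lemma Mmono lam kap p : 0 < lam -> lam <= kap -> M lam p <= M kap p.
Proof. intros; destruct HW as [_ [_ HH]]; auto. Qed.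

Lemma pow_over_M_bounded lam t : 0 < lam -> 0 <= t ->
  exists B, forall p, t ^ p / M lam p <= B.
Proof.
  intros Hl Ht. generalize (Hlim lam Hl). intros H. apply is_lim_seq_spec in H.
  destruct (H (t + 1)) as [N HN].
  exists (1 + fsum (fun p => t ^ p / M lam p) (S N)).
  assert (Hnn : forall p, 0 <= t ^ p / M lam p).
  { intros p. apply Rmult_le_pos; [apply pow_le; lra|]. apply Rlt_le, Rinv_0_lt_compat, Mpos; auto. }
  intros p. destruct (le_lt_dec p N) as [hp|hp].
  - generalize (fsum_term _ (S N) p Hnn ltac:(lia)). lra.
  - assert (H1 : t ^ p / M lam p <= 1).
    { specialize (HN p ltac:(lia)).
      set (y := Rpower (M lam p) (/ INR p)) in *.
      assert (Hy : M lam p = y ^ p).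
      { unfold y. rewrite <- Rpower_pow.
        - rewrite Rpower_mult. rewrite Rinv_l. rewrite Rpower_1; auto. apply Mpos; auto.
          apply not_0_INR; lia.
        - unfold Rpower. apply exp_pos. }
      rewrite Hy. apply (Rdiv_le_1 (t ^ p) (y ^ p)). { apply pow_lt. lra. }
      apply pow_incr. lra. }
    generalize (fsum_nonneg _ (S N) Hnn). lra.
Qed.

Definition term lam h k p := (sqrt (INR k) / h) ^ p / M lam p.
Definition Wt lam h k := supS (term lam h k).

Lemma term_nonneg lam h k p : 0 < lam -> 0 < h -> 0 <= term lam h k p.
Proof. intros. unfold term. apply Rmult_le_pos; [apply pow_le|].
  - apply Rmult_le_pos; [apply sqrt_pos|]. apply Rlt_le, Rinv_0_lt_compat; auto.
  - apply Rlt_le, Rinv_0_lt_compat, Mpos; auto. Qed.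

Lemma term_bounded lam h k : 0 < lam -> 0 < h -> exists B, forall p, term lam h k p <= B.
Proof. intros. apply pow_over_M_bounded; auto.
  apply Rmult_le_pos; [apply sqrt_pos|]. apply Rlt_le, Rinv_0_lt_compat; auto. Qed.

Lemma Wt_ub lam h k p : 0 < lam -> 0 < h -> term lam h k p <= Wt lam h k.
Proof. intros. apply sup_ub. apply term_bounded; auto. Qed.

Lemma Wt_le lam h k B : (forall p, term lam h k p <= B) -> Wt lam h k <= B.
Proof. apply sup_le. Qed.

Lemma Wt_ge1 lam h k : 0 < lam -> 0 < h -> 1 <= Wt lam h k.
Proof. intros. generalize (Wt_ub lam h k 0 H H0). unfold term. simpl. rewrite M0; auto. lra. Qed.

Lemma Wt_pos lam h k : 0 < lam -> 0 < h -> 0 < Wt lam h k.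
Proof. intros. generalize (Wt_ge1 lam h k H H0). lra. Qed.

Lemma term_mono lam lam' h h' k p : 0 < lam -> lam <= lam' -> 0 < h -> h <= h' ->
  term lam' h' k p <= term lam h k p.
Proof.
  intros. unfold term. unfold Rdiv at 2 4.
  apply Rmult_le_compat.
  - apply pow_le. apply Rmult_le_pos; [apply sqrt_pos|]. apply Rlt_le, Rinv_0_lt_compat; lra.
  - apply Rlt_le, Rinv_0_lt_compat, Mpos; lra.
  - apply pow_incr. split.
    + apply Rmult_le_pos; [apply sqrt_pos|]. apply Rlt_le, Rinv_0_lt_compat; lra.
    + apply Rmult_le_compat_l; [apply sqrt_pos|]. apply Rinv_le_contravar; lra.
  - apply Rinv_le_contravar; [apply Mpos; auto|]. apply Mmono; auto.
Qed.

Lemma Wt_mono lam lam' h h' k : 0 < lam -> lam <= lam' -> 0 < h -> h <= h' ->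
  Wt lam' h' k <= Wt lam h k.
Proof.
  intros. apply Wt_le. intros p. apply (Rle_trans _ (term lam h k p)); [apply term_mono; auto|].
  apply Wt_ub; auto.
Qed.

Lemma term_mono_k lam h k k' p : 0 < lam -> 0 < h -> (k <= k')%nat ->
  term lam h k p <= term lam h k' p.
Proof.
  intros. unfold term. unfold Rdiv at 1 3. apply Rmult_le_compat_r.
  - apply Rlt_le, Rinv_0_lt_compat, Mpos; lra.
  - apply pow_incr. split.
    + apply Rmult_le_pos; [apply sqrt_pos|]. apply Rlt_le, Rinv_0_lt_compat; lra.
    + apply Rmult_le_compat_r; [apply Rlt_le, Rinv_0_lt_compat; lra|].
      apply sqrt_le_1_alt. apply le_INR; auto.
Qed.

Lemma Wt_mono_k lam h k k' : 0 < lam -> 0 < h -> (k <= k')%nat ->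
  Wt lam h k <= Wt lam h k'.
Proof.
  intros. apply Wt_le. intros p. apply (Rle_trans _ (term lam h k' p)); [apply term_mono_k; auto|].
  apply Wt_ub; auto.
Qed.

Lemma Wt_mult_le a lam h k B : 0 < lam -> 0 < h -> 0 <= a ->
  (forall p, a * term lam h k p <= B) -> a * Wt lam h k <= B.
Proof.
  intros Hl Hh Ha HB. destruct (Req_dec a 0) as [->|Hne].
  - specialize (HB 0%nat). lra.
  - assert (Wt lam h k <= B / a).
    { apply Wt_le. intros p. apply (Rmult_le_reg_l a); [lra|].
      replace (a * (B / a)) with B by (field; lra). auto. }
    apply (Rmult_le_compat_l a) in H; [|lra]. replace (a * (B / a)) with B in H by (field; lra). lra.
Qed.

End Weights.

Lemma nat_gt (r : R) : exists n : nat, r < INR n.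
Proof.
  destruct (archimed r) as [H1 _].
  destruct (Z_lt_le_dec (up r) 0) as [h|h].
  - exists 0%nat. simpl. apply IZR_lt in h. lra.
  - exists (Z.to_nat (up r)). rewrite INR_IZR_INZ. rewrite Z2Nat.id; auto.
Qed.

Lemma nat_ge1 (r : R) : exists n : nat, (1 <= n)%nat /\ r <= INR n.
Proof.
  destruct (nat_gt r) as [n Hn]. exists (S n). split; [lia|]. rewrite S_INR. lra.
Qed.

Lemma INR_pos_ge1 (j : nat) : (1 <= j)%nat -> 0 < INR j.
Proof. intros; apply lt_0_INR; lia. Qed.

Lemma INR_ge1 (j : nat) : (1 <= j)%nat -> 1 <= INR j.
Proof. intros; apply (le_INR 1); lia. Qed.

Lemma ex_series_cmp (a b : nat -> R) : (forall n, 0 <= a n <= b n) -> ex_series b -> ex_series a.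
Proof.
  intros H Hb. apply (ex_series_bounded a (Series b)).
  - intros n; apply H.
  - intros N. apply Rle_trans with (fsum b N).
    + apply fsum_le; intros; apply H.
    + apply fsum_le_Series; auto. intros n; specialize (H n); lra.
Qed.

Lemma ex_series_plus_R (a b : nat -> R) : ex_series a -> ex_series b ->
  ex_series (fun n => a n + b n).
Proof. intros Ha Hb. apply (ex_series_plus a b Ha Hb). Qed.

Definition ev (m : nat) : cseq := fun k => if Nat.eqb k m then RtoC 1 else RtoC 0.
Definition lc (a : cseq) (N : nat) : cseq := fun i => if Nat.ltb i N then a i else RtoC 0.
Definition tl (x : cseq) (N : nat) : cseq := fun i => if Nat.ltb i N then RtoC 0 else x i.

Lemma Cmod_RtoC_pos r : 0 <= r -> Cmod (RtoC r) = r.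
Proof. intros; rewrite Cmod_R, Rabs_pos_eq; auto. Qed.

Section Dir2.
Variable M : wmatrix.
Hypothesis HW : is_weight_matrix M.
Hypothesis Hlim : forall lam, 0 < lam ->
     is_lim_seq (fun p : nat => Rpower (M lam p) (/ INR p)) p_infty.

Let Wub := Wt_ub M HW Hlim.
Let Wge1 := Wt_ge1 M HW Hlim.
Let Wmono := Wt_mono M HW Hlim.
Let WmonoK := Wt_mono_k M HW Hlim.
Let Wpos := Wt_pos M HW Hlim.
Let tnn := term_nonneg M HW.
Let tmono := term_mono M HW.

Lemma wbound_nonneg lam h c B : 0 < lam -> 0 < h -> wbound (M lam) h c B -> 0 <= B.
Proof.
  intros Hl Hh H. specialize (H 0%nat 0%nat). eapply Rle_trans; [|apply H].
  apply Rmult_le_pos; [apply Cmod_ge_0|]. apply (tnn lam h 0 0); auto.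
Qed.

Lemma wbound_Wt lam h c B k : 0 < lam -> 0 < h -> wbound (M lam) h c B ->
  Cmod (c k) * Wt M lam h k <= B.
Proof.
  intros Hl Hh H. apply Wt_mult_le; auto. apply Cmod_ge_0. intros p. apply H.
Qed.

Lemma inLambda_step x : inLambda M x ->
  exists j B, (1 <= j)%nat /\ wbound (M (INR j)) (INR j) x B.
Proof.
  intros [lam [h [B [Hl [Hh HB]]]]].
  destruct (nat_ge1 (Rmax lam h)) as [j [Hj Hjr]].
  exists j, B. split; auto. intros k p.
  eapply Rle_trans; [|apply (HB k p)].
  apply Rmult_le_compat_l; [apply Cmod_ge_0|].
  apply tmono; auto; generalize (Rmax_l lam h) (Rmax_r lam h); lra.
Qed.

Lemma step_inLambda j x B : (1 <= j)%nat -> wbound (M (INR j)) (INR j) x B -> inLambda M x.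
Proof.
  intros Hj H. exists (INR j), (INR j), B. repeat split; auto; apply INR_pos_ge1; auto.
Qed.

Lemma ev_wbound lam h m : 0 < lam -> 0 < h -> wbound (M lam) h (ev m) (Wt M lam h m).
Proof.
  intros Hl Hh k p. unfold ev. destruct (Nat.eqb_spec k m) as [->|hne].
  - rewrite Cmod_1, Rmult_1_l. apply Wub; auto.
  - rewrite Cmod_0, Rmult_0_l. generalize (Wge1 lam h m Hl Hh). lra.
Qed.

Lemma ev_inLambda m : inLambda M (ev m).
Proof. exists 1, 1, (Wt M 1 1 m). repeat split; try lra. apply ev_wbound; lra. Qed.

Lemma lc_inLambda a N : inLambda M (lc a N).
Proof.
  exists 1, 1, (fsum (fun k => Cmod (a k) * Wt M 1 1 k) N). repeat split; try lra.
  intros k p. unfold lc. destruct (Nat.ltb_spec k N) as [hk|hk].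
  - eapply Rle_trans; [|apply (fsum_term _ N k)]; auto.
    + apply Rmult_le_compat_l; [apply Cmod_ge_0|]. apply Wub; lra.
    + intros i. apply Rmult_le_pos; [apply Cmod_ge_0|]. generalize (Wge1 1 1 i); lra.
  - rewrite Cmod_0, Rmult_0_l. apply fsum_nonneg.
    intros i. apply Rmult_le_pos; [apply Cmod_ge_0|]. generalize (Wge1 1 1 i); lra.
Qed.

Lemma scal_inLambda a x : inLambda M x -> inLambda M (fun k => Cmult a (x k)).
Proof.
  intros [lam [h [B [Hl [Hh HB]]]]]. exists lam, h, (Cmod a * B). repeat split; auto.
  intros k p. rewrite Cmod_mult, Rmult_assoc. apply Rmult_le_compat_l; auto. apply Cmod_ge_0.
Qed.


Lemma tl_wbound x N lam h B : 0 < lam -> 0 < h -> wbound (M lam) h x B -> wbound (M lam) h (tl x N) B.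
Proof.
  intros Hl Hh H k p. unfold tl. destruct (Nat.ltb k N); auto.
  rewrite Cmod_0, Rmult_0_l. eapply Rle_trans; [|apply (H k p)].
  apply Rmult_le_pos; [apply Cmod_ge_0|]. apply tnn; auto.
Qed.

Hypothesis Hcond : forall lam, 0 < lam ->
     exists kap A, lam <= kap /\ 1 <= A /\
       forall p : nat, M lam (p + 1)%nat <= A ^ (p + 1) * M kap p.

Lemma step1 lam h : 0 < lam -> 0 < h -> exists kap h', lam <= kap /\ h <= h' /\
  forall k p, (1 <= k)%nat -> term M kap h' k p <= h' / sqrt (INR k) * term M lam h k (S p).
Proof.
  intros Hl Hh. destruct (Hcond lam Hl) as [kap [A [Hk [HA Hin]]]].
  exists kap, (h * A). split; auto. split; [nra|].
  intros k p Hk1. unfold term.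
  assert (Hs : 0 < sqrt (INR k)) by (apply sqrt_lt_R0, lt_0_INR; lia).
  set (s := sqrt (INR k)) in *.
  assert (HMk : 0 < M kap p) by (apply Mpos; auto; lra).
  assert (HMl : 0 < M lam (S p)) by (apply Mpos; auto).
  specialize (Hin p). rewrite Nat.add_1_r in Hin.
  set (u := s / h).
  assert (Hu : 0 <= u) by (unfold u; apply Rlt_le, Rdiv_lt_0_compat; auto).
  replace (s / (h * A)) with (u * / A) by (unfold u; field; lra).
  rewrite Rpow_mult_distr, pow_inv.
  assert (HAp : 0 < A ^ p) by (apply pow_lt; lra).
  replace (u ^ p * / A ^ p / M kap p) with (u ^ p * / (A ^ p * M kap p)) by (field; lra).
  replace (h * A / s * (u ^ S p / M lam (S p))) with (u ^ p * / (M lam (S p) / A)).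
  2:{ simpl. unfold u. field. repeat split; lra. }
  apply Rmult_le_compat_l; [apply pow_le; auto|].
  apply Rinv_le_contravar; [apply Rdiv_lt_0_compat; lra|].
  apply (Rmult_le_reg_l A); [lra|]. replace (A * (M lam (S p) / A)) with (M lam (S p)) by (field; lra).
  simpl in Hin. lra.
Qed.

Lemma iter n : forall lam h, 0 < lam -> 0 < h -> exists kap h' c, lam <= kap /\ h <= h' /\ 0 < c /\
  forall k p, (1 <= k)%nat -> term M kap h' k p <= c / sqrt (INR k) ^ n * term M lam h k (p + n).
Proof.
  induction n; intros lam h Hl Hh.
  - exists lam, h, 1. repeat split; try lra. intros k p _. simpl. rewrite Nat.add_0_r. lra.
  - destruct (IHn lam h Hl Hh) as [kap [h' [c [Hk [Hh' [Hc Hin]]]]]].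
    destruct (step1 kap h') as [kap2 [h2 [Hk2 [Hh2 Hin2]]]]; try lra.
    exists kap2, h2, (h2 * c). repeat split; try lra. { apply Rmult_lt_0_compat; lra. }
    intros k p Hk1.
    assert (Hs : 0 < sqrt (INR k)) by (apply sqrt_lt_R0, lt_0_INR; lia).
    eapply Rle_trans; [apply Hin2; auto|].
    specialize (Hin k (S p) Hk1). replace (S p + n)%nat with (p + S n)%nat in Hin by lia.
    assert (0 <= h2 / sqrt (INR k)) by (apply Rlt_le, Rdiv_lt_0_compat; lra).
    apply Rmult_le_compat_l with (r := h2 / sqrt (INR k)) in Hin; auto.
    eapply Rle_trans; [apply Hin|]. right. simpl. field.
    split; [|lra]. apply pow_nonzero. lra.
Qed.

Lemma decay (j : nat) n : (1 <= j)%nat -> exists (j' : nat) c, (1 <= j')%nat /\ INR j <= INR j' /\ 0 < c /\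
  forall k p, (1 <= k)%nat -> term M (INR j') (INR j') k p <= c / sqrt (INR k) ^ n * term M (INR j) (INR j) k (p + n).
Proof.
  intros Hj. assert (Hj0 := INR_pos_ge1 j Hj).
  destruct (iter n (INR j) (INR j) Hj0 Hj0) as [kap [h' [c [Hk [Hh [Hc Hin]]]]]].
  destruct (nat_ge1 (Rmax kap h')) as [j' [Hj' Hr]].
  generalize (Rmax_l kap h') (Rmax_r kap h'); intros.
  exists j', c. repeat split; auto; try lra.
  intros k p Hk1. eapply Rle_trans; [|apply Hin; auto].
  apply tmono; lra.
Qed.

Lemma Wdecay (j j' : nat) c n k : (1 <= j)%nat -> (1 <= k)%nat -> 0 < c ->
  (forall k p, (1 <= k)%nat -> term M (INR j') (INR j') k p <= c / sqrt (INR k) ^ n * term M (INR j) (INR j) k (p + n)) ->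
  Wt M (INR j') (INR j') k <= c / sqrt (INR k) ^ n * Wt M (INR j) (INR j) k.
Proof.
  intros Hj Hk Hc H. apply Wt_le. intros p. eapply Rle_trans; [apply H; auto|].
  apply Rmult_le_compat_l.
  - apply Rlt_le, Rdiv_lt_0_compat; auto. apply pow_lt, sqrt_lt_R0, lt_0_INR; lia.
  - apply Wub; apply INR_pos_ge1; auto.
Qed.

Lemma sqrt8 k : sqrt (INR k) ^ 8 = INR k ^ 4.
Proof. replace 8%nat with (2 * 4)%nat by lia. rewrite pow_mult, pow2_sqrt; auto. apply pos_INR. Qed.


Section Fixp.
Variable pp : cseq -> R.
Hypothesis Hp : cont_seminorm M pp.

Definition pe n := pp (ev n).

Lemma pe_nonneg n : 0 <= pe n.
Proof. destruct Hp as [[H0 _] _]. apply H0, ev_inLambda. Qed.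

Lemma pe_bound (j : nat) : (1 <= j)%nat -> exists Cs, 0 <= Cs /\ forall n, pe n <= Cs * Wt M (INR j) (INR j) n.
Proof.
  intros Hj. destruct Hp as [_ Hc]. destruct (Hc j Hj) as [Cst HC].
  exists (Rmax Cst 0). split; [apply Rmax_r|]. intros n.
  eapply Rle_trans; [apply HC, ev_wbound; apply INR_pos_ge1; auto|].
  apply Rmult_le_compat_r; [generalize (Wge1 (INR j) (INR j) n); intros HH; 
     assert (0 < INR j) by (apply INR_pos_ge1; auto); specialize (HH H H); lra|apply Rmax_l].
Qed.

Lemma KEY (j : nat) : (1 <= j)%nat -> exists K, 0 <= K /\ forall x B, wbound (M (INR j)) (INR j) x B ->
  forall n, Cmod (x n) * pe n * (INR n + 1) ^ 2 <= / (INR n + 1) ^ 2 * (K * B).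
Proof.
  intros Hj. destruct (decay j 8 Hj) as [j' [c [Hj' [Hjj [Hc Hdec]]]]].
  destruct (pe_bound j' Hj') as [Cs [HCs Hpe]].
  assert (Hj0 := INR_pos_ge1 j Hj). assert (Hj0' := INR_pos_ge1 j' Hj').
  exists (Cs * (1 + 16 * c)). split; [apply Rmult_le_pos; lra|].
  intros x B HB n.
  assert (HB0 : 0 <= B) by (apply (wbound_nonneg _ _ x B Hj0 Hj0 HB)).
  assert (HX := wbound_Wt _ _ _ _ n Hj0 Hj0 HB).
  assert (Hxn := Cmod_ge_0 (x n)).
  destruct n as [|n].
  - simpl. replace ((0 + 1) * ((0 + 1) * 1)) with 1 by ring.
    rewrite Rinv_1. 
    assert (pe 0 <= Cs * Wt M (INR j) (INR j) 0).
    { eapply Rle_trans; [apply Hpe|]. apply Rmult_le_compat_l; auto. }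
    assert (Cmod (x 0%nat) * pe 0 <= Cs * B).
    { eapply Rle_trans. apply Rmult_le_compat_l; [apply Hxn|apply H]. nra. }
    assert (0 <= Cs * (16 * c) * B) by (repeat apply Rmult_le_pos; lra). nra.
  - set (r := INR (S n)). assert (Hr : 1 <= r) by (apply INR_ge1; lia).
    assert (HW' := Wdecay j j' c 8 (S n) Hj ltac:(lia) Hc Hdec). rewrite sqrt8 in HW'. fold r in HW'.
    assert (Hr4 : 0 < r ^ 4) by (apply pow_lt; lra).
    assert (H1 : pe (S n) <= Cs * (c / r ^ 4) * Wt M (INR j) (INR j) (S n)).
    { eapply Rle_trans; [apply Hpe|]. rewrite Rmult_assoc. apply Rmult_le_compat_l; auto. }
    assert (H2 : Cmod (x (S n)) * pe (S n) <= Cs * (c / r ^ 4) * B).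
    { eapply Rle_trans. apply Rmult_le_compat_l; [apply Hxn|apply H1].
      replace (Cmod (x (S n)) * (Cs * (c / r ^ 4) * Wt M (INR j) (INR j) (S n)))
        with (Cs * (c / r ^ 4) * (Cmod (x (S n)) * Wt M (INR j) (INR j) (S n))) by ring.
      apply Rmult_le_compat_l; auto. apply Rmult_le_pos; auto. apply Rlt_le, Rdiv_lt_0_compat; auto. }
    assert (H3 : (r + 1) ^ 2 / r ^ 4 <= 16 / (r + 1) ^ 2).
    { apply (Rmult_le_reg_r (r ^ 4 * (r + 1) ^ 2)). { apply Rmult_lt_0_compat; auto. apply pow_lt; lra. }
      replace ((r + 1) ^ 2 / r ^ 4 * (r ^ 4 * (r + 1) ^ 2)) with ((r + 1) ^ 2 * (r + 1) ^ 2) by (field; lra).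
      replace (16 / (r + 1) ^ 2 * (r ^ 4 * (r + 1) ^ 2)) with (16 * r ^ 4) by (field; lra).
      assert (0 <= r + 1 <= 2 * r) by lra.
      assert ((r+1)^2 <= (2*r)^2) by (apply pow_incr; lra). simpl in *. nra. }
    assert (H4 : Cmod (x (S n)) * pe (S n) * (r + 1) ^ 2 <= Cs * c * B * ((r + 1) ^ 2 / r ^ 4)).
    { eapply Rle_trans. apply Rmult_le_compat_r; [apply pow_le; lra|apply H2]. right. field. lra. }
    eapply Rle_trans; [apply H4|].
    assert (0 <= Cs * c * B) by (repeat apply Rmult_le_pos; lra).
    eapply Rle_trans. apply Rmult_le_compat_l; [auto|apply H3].
    replace (Cs * c * B * (16 / (r + 1) ^ 2)) with (/ (r + 1) ^ 2 * (Cs * (16 * c) * B)) by (field; lra).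
    apply Rmult_le_compat_l. { apply Rlt_le, Rinv_0_lt_compat, pow_lt; lra. }
    assert (0 <= Cs * B) by (apply Rmult_le_pos; lra). nra.
Qed.


Lemma TAIL (j : nat) : (1 <= j)%nat -> exists E, 0 <= E /\ forall x B, wbound (M (INR j)) (INR j) x B ->
  forall N, (1 <= N)%nat -> pp (tl x N) <= E * B / INR N.
Proof.
  intros Hj. destruct (decay j 8 Hj) as [j' [c [Hj' [Hjj [Hc Hdec]]]]].
  destruct Hp as [[Hp0 _] Hpc]. destruct (Hpc j' Hj') as [Cst HC].
  assert (Hj0 := INR_pos_ge1 j Hj). assert (Hj0' := INR_pos_ge1 j' Hj').
  exists (Rmax Cst 0 * c). split; [apply Rmult_le_pos; [apply Rmax_r|lra]|].
  intros x B HB N HN.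
  assert (HB0 : 0 <= B) by (apply (wbound_nonneg _ _ x B Hj0 Hj0 HB)).
  assert (HN0 : 0 < INR N) by (apply INR_pos_ge1; auto).
  assert (Hw : wbound (M (INR j')) (INR j') (tl x N) (c * B / INR N)).
  { intros k p. unfold tl. destruct (Nat.ltb_spec k N) as [hk|hk].
    - rewrite Cmod_0, Rmult_0_l. apply Rmult_le_pos; [nra|]. apply Rlt_le, Rinv_0_lt_compat; auto.
    - assert (Hk1 : (1 <= k)%nat) by lia.
      assert (Hk : INR N <= INR k) by (apply le_INR; lia).
      specialize (Hdec k p Hk1). rewrite sqrt8 in Hdec.
      assert (Hk4 : INR k <= INR k ^ 4).
      { assert (1 <= INR k) by (apply INR_ge1; auto).
        replace (INR k ^ 4) with (INR k * (INR k * INR k * INR k)) by ring.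
        assert (1 <= INR k * INR k * INR k).
        { assert (1 <= INR k * INR k) by nra. nra. }
        nra. }
      assert (Hxk := HB k (p + 8)%nat).
      assert (Hxn := Cmod_ge_0 (x k)).
      apply Rle_trans with (Cmod (x k) * (c / INR k ^ 4 * term M (INR j) (INR j) k (p + 8))).
      { apply Rmult_le_compat_l; auto. }
      replace (Cmod (x k) * (c / INR k ^ 4 * term M (INR j) (INR j) k (p + 8)))
        with (c / INR k ^ 4 * (Cmod (x k) * term M (INR j) (INR j) k (p + 8))) by ring.
      assert (0 < INR k ^ 4) by lra.
      apply Rle_trans with (c / INR k ^ 4 * B).
      { apply Rmult_le_compat_l; auto. apply Rlt_le, Rdiv_lt_0_compat; auto. }
      unfold Rdiv. rewrite (Rmult_comm c), Rmult_assoc, (Rmult_comm (c * B)).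
      apply Rmult_le_compat_r; [nra|]. apply Rinv_le_contravar; lra. }
  eapply Rle_trans; [apply HC, Hw|].
  unfold Rdiv. rewrite <- !Rmult_assoc. apply Rmult_le_compat_r. { apply Rlt_le, Rinv_0_lt_compat; auto. }
  apply Rmult_le_compat_r; [auto|]. apply Rmult_le_compat_r; [lra|]. apply Rmax_l.
Qed.


Lemma lc0 (x : cseq) : lc x 0 = (fun k => Cmult (RtoC 0) (ev 0 k)).
Proof. apply functional_extensionality; intros k. unfold lc. simpl. ring. Qed.

Lemma lc_succ (x : cseq) N : lc x (S N) = (fun k => Cplus (Cmult (x N) (ev N k)) (lc x N k)).
Proof.
  apply functional_extensionality; intros k. unfold lc, ev.
  destruct (Nat.ltb_spec k (S N)), (Nat.eqb_spec k N), (Nat.ltb_spec k N); subst; try lia; ring.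
Qed.

Lemma x_split (x : cseq) N : x = (fun k => Cplus (lc x N k) (tl x N k)).
Proof.
  apply functional_extensionality; intros k. unfold lc, tl.
  destruct (Nat.ltb_spec k N); ring.
Qed.

Lemma p_lc x N : pp (lc x N) <= fsum (fun n => Cmod (x n) * pe n) N.
Proof.
  destruct Hp as [[Hp0 [Hpadd Hphom]] _].
  induction N.
  - rewrite lc0, Hphom by apply ev_inLambda. rewrite Cmod_0. simpl; lra.
  - rewrite lc_succ. simpl fsum.
    eapply Rle_trans; [apply Hpadd; [apply scal_inLambda, ev_inLambda|apply lc_inLambda]|].
    rewrite Hphom by apply ev_inLambda. unfold pe at 2. lra.
Qed.

Lemma a_bound x : inLambda M x -> exists KB, forall n,
  0 <= Cmod (x n) * pe n * (INR n + 1) ^ 2 <= / (INR n + 1) ^ 2 * KB.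
Proof.
  intros Hx. destruct (inLambda_step x Hx) as [j [B [Hj HB]]].
  destruct (KEY j Hj) as [K [HK HKEY]]. exists (K * B). intros n. split.
  - apply Rmult_le_pos; [apply Rmult_le_pos; [apply Cmod_ge_0|apply pe_nonneg]|apply pow_le; generalize (pos_INR n); lra].
  - apply HKEY; auto.
Qed.

Lemma g_ex x : inLambda M x -> ex_series (fun n => Cmod (x n) * pe n * (INR n + 1) ^ 2).
Proof.
  intros Hx. destruct (a_bound x Hx) as [KB H].
  apply (ex_series_cmp _ (fun n => / (INR n + 1) ^ 2 * KB)); auto.
  apply ex_series_scal_r. apply ex_series_inv_sq.
Qed.

Lemma a_ex x : inLambda M x -> ex_series (fun n => Cmod (x n) * pe n).
Proof.
  intros Hx. apply (ex_series_cmp _ (fun n => Cmod (x n) * pe n * (INR n + 1) ^ 2)); [|apply (g_ex x Hx)].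
  intros n.
  assert (0 <= Cmod (x n) * pe n) by (apply Rmult_le_pos; [apply Cmod_ge_0|apply pe_nonneg]).
  assert (1 <= (INR n + 1) ^ 2).
  { generalize (pos_INR n); intros. simpl. nra. }
  split; [auto|]. nra.
Qed.

Lemma p_le_series x : inLambda M x -> pp x <= Series (fun n => Cmod (x n) * pe n).
Proof.
  intros Hx. destruct (inLambda_step x Hx) as [j [B [Hj HB]]].
  destruct (TAIL j Hj) as [E [HE HT]].
  assert (Hj0 := INR_pos_ge1 j Hj).
  assert (HB0 : 0 <= B) by (apply (wbound_nonneg _ _ x B Hj0 Hj0 HB)).
  destruct Hp as [[Hp0 [Hpadd Hphom]] _].
  set (S := Series (fun n => Cmod (x n) * pe n)).
  assert (Hle : forall N, (1 <= N)%nat -> pp x <= S + E * B / INR N).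
  { intros N HN. rewrite (x_split x N) at 1.
    eapply Rle_trans; [apply Hpadd; [apply lc_inLambda|]|].
    { apply (step_inLambda j _ B Hj). apply tl_wbound; auto. }
    apply Rplus_le_compat; [|apply HT; auto].
    eapply Rle_trans; [apply p_lc|]. apply fsum_le_Series; [|apply a_ex; auto].
    intros n; apply Rmult_le_pos; [apply Cmod_ge_0|apply pe_nonneg]. }
  destruct (Rle_or_lt (pp x) S) as [h|h]; auto. exfalso.
  assert (HEB : 0 <= E * B) by (apply Rmult_le_pos; auto).
  destruct (nat_gt (E * B / (pp x - S))) as [N HN].
  assert (HN1 : (1 <= N)%nat).
  { destruct N; [|lia]. simpl in HN. assert (0 <= E * B / (pp x - S)) by (apply Rmult_le_pos; [auto|apply Rlt_le, Rinv_0_lt_compat; lra]). lra. }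
  specialize (Hle N HN1). assert (0 < INR N) by (apply INR_pos_ge1; auto).
  assert (E * B < INR N * (pp x - S)).
  { apply (Rmult_lt_compat_r (pp x - S)) in HN; [|lra].
    replace (E * B / (pp x - S) * (pp x - S)) with (E * B) in HN by (field; lra). lra. }
  assert (E * B / INR N < pp x - S).
  { apply (Rmult_lt_reg_r (INR N)); auto. replace (E * B / INR N * INR N) with (E * B) by (field; lra). lra. }
  lra.
Qed.

End Fixp.

Lemma dir2 : Lambda_nuclear M.
Proof.
  intros pp Hp.
  set (g := fun (x : cseq) n => Cmod (x n) * pe pp n * (INR n + 1) ^ 2).
  assert (Hpe0 := pe_nonneg pp Hp).
  assert (Hsq : forall n, 0 < (INR n + 1) ^ 2) by (intros n; apply pow_lt; generalize (pos_INR n); lra).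
  assert (Hg0 : forall x n, 0 <= g x n).
  { intros x n; unfold g. apply Rmult_le_pos; [apply Rmult_le_pos; [apply Cmod_ge_0|auto]|apply Rlt_le; auto]. }
  exists (fun x => Series (g x)), (fun n x => Cmult (x n) (RtoC (pe pp n))), (fun n => / (INR n + 1) ^ 2).
  split; [split; [split; [|split]|]|split; [|split; [|split; [|split]]]].
  - intros x _. apply Series_ge0; auto.
  - intros x y Hx Hy.
    rewrite <- Series_plus by (apply g_ex; auto).
    apply Series_le.
    + intros n. split; auto. unfold g. rewrite <- Rmult_plus_distr_r. apply Rmult_le_compat_r; [apply Rlt_le; auto|].
      rewrite <- Rmult_plus_distr_r. apply Rmult_le_compat_r; auto. apply Cmod_triangle.
    + apply ex_series_plus_R; apply g_ex; auto.
  - intros a x Hx. rewrite <- Series_scal_l. apply Series_ext. intros n. unfold g. rewrite Cmod_mult. ring.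
  - intros j Hj. destruct (KEY pp Hp j Hj) as [K [HK HKEY]].
    exists (Series (fun n => / (INR n + 1) ^ 2) * K). intros c B HB.
    eapply Rle_trans. apply (Series_le _ (fun n => / (INR n + 1) ^ 2 * (K * B))).
    + intros n; split; auto. apply HKEY; auto.
    + apply ex_series_scal_r, ex_series_inv_sq.
    + rewrite Series_scal_r. right; ring.
  - intros n a x y Hx Hy. simpl. ring.
  - intros n. apply Rlt_le, Rinv_0_lt_compat; auto.
  - apply ex_series_inv_sq.
  - intros n x Hx. rewrite Cmod_mult, Cmod_RtoC_pos by auto.
    replace (Cmod (x n) * pe pp n) with (/ (INR n + 1) ^ 2 * g x n).
    2:{ unfold g. field. generalize (pos_INR n); intros; lra. }
    apply Rmult_le_compat_l; [apply Rlt_le, Rinv_0_lt_compat; auto|].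
    eapply Rle_trans; [apply (fsum_term (g x) (S n) n); auto|]. apply fsum_le_Series; auto. apply g_ex; auto.
  - intros x Hx.
    assert (He : forall n, Cmod (Cmult (x n) (RtoC (pe pp n))) = Cmod (x n) * pe pp n).
    { intros n. rewrite Cmod_mult, Cmod_RtoC_pos; auto. }
    split.
    + eapply ex_series_ext; [intros n; symmetry; apply He|]. apply a_ex; auto.
    + rewrite (Series_ext _ _ He). apply p_le_series; auto.
Qed.



End Dir2.

Lemma Series_zero : Series (fun _ => 0) = 0.
Proof.
  rewrite (Series_ext (fun _ => 0) (fun n => 0 * 0)) by (intros; ring).
  rewrite Series_scal_l. ring.
Qed.

Lemma swap_fsum_Series (g : nat -> nat -> R) N : (forall k, ex_series (g k)) ->
  ex_series (fun n => fsum (fun k => g k n) N) /\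
  fsum (fun k => Series (g k)) N = Series (fun n => fsum (fun k => g k n) N).
Proof.
  intros Hg. induction N.
  - simpl. split; [|rewrite Series_zero; auto].
    apply (ex_series_bounded _ 0); [intros; lra|]. intros N'; induction N'; simpl; lra.
  - destruct IHN as [He Heq]. simpl. split.
    + apply (ex_series_plus_R _ _ He (Hg N)).
    + rewrite Heq. rewrite <- Series_plus; auto.
Qed.

Definition phase (z : C) : C :=
  if Req_EM_T (Cmod z) 0 then RtoC 1 else Cmult (Cconj z) (RtoC (/ Cmod z)).

Lemma phase_mul z : Cmult (phase z) z = RtoC (Cmod z).
Proof.
  unfold phase. destruct (Req_EM_T (Cmod z) 0) as [h|h].
  - rewrite h. apply Cmod_eq_0 in h. rewrite h. ring.
  - transitivity (Cmult (Cmult z (Cconj z)) (RtoC (/ Cmod z))); [ring|].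
    rewrite <- Cmod2_conj. rewrite <- RtoC_mult. f_equal. field. auto.
Qed.

Lemma phase_mod z : Cmod (phase z) <= 1.
Proof.
  unfold phase. destruct (Req_EM_T (Cmod z) 0) as [h|h].
  - rewrite Cmod_1; lra.
  - rewrite Cmod_mult, Cmod_conj, Cmod_RtoC_pos.
    + right. field. auto.
    + apply Rlt_le, Rinv_0_lt_compat. generalize (Cmod_ge_0 z); lra.
Qed.

Section Dir1.
Variable M : wmatrix.
Hypothesis HW : is_weight_matrix M.
Hypothesis Hlim : forall lam, 0 < lam ->
     is_lim_seq (fun p : nat => Rpower (M lam p) (/ INR p)) p_infty.

Let Wub := Wt_ub M HW Hlim.
Let Wge1 := Wt_ge1 M HW Hlim.
Let Wmono := Wt_mono M HW Hlim.
Let WmonoK := Wt_mono_k M HW Hlim.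
Let Wpos := Wt_pos M HW Hlim.
Let tnn := term_nonneg M HW.
Let tmono := term_mono M HW.
Let lcL := lc_inLambda M HW Hlim.
Let evL := ev_inLambda M HW Hlim.

Lemma lin_zero (f : cseq -> C) : is_linear_functional M f -> f (lc (fun _ => RtoC 0) 0) = RtoC 0.
Proof.
  intros Hf. set (Z := lc (fun _ => RtoC 0) 0).
  assert (HZ : Z = (fun k => Cplus (Cmult (RtoC 1) (Z k)) (Z k))).
  { apply functional_extensionality; intros k. unfold Z, lc. simpl. ring. }
  assert (H := Hf (RtoC 1) Z Z (lcL _ _) (lcL _ _)). rewrite <- HZ in H.
  assert (H2 : Cminus (f Z) (f Z) = Cminus (Cplus (Cmult (RtoC 1) (f Z)) (f Z)) (f Z)) by (rewrite <- H; auto).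
  replace (Cminus (f Z) (f Z)) with (RtoC 0) in H2 by ring.
  rewrite H2. ring.
Qed.

Lemma lin_real (f : cseq -> C) (a : cseq) (r : nat -> R) N : is_linear_functional M f ->
  (forall k, Cmult (a k) (f (ev k)) = RtoC (r k)) -> f (lc a N) = RtoC (fsum r N).
Proof.
  intros Hf Hr. induction N.
  - simpl. rewrite <- (lin_zero f Hf). f_equal.
  - rewrite lc_succ. rewrite Hf by auto. rewrite IHN, Hr. simpl. rewrite RtoC_plus. ring.
Qed.


Section StepA.
Variable v : nat -> R.
Hypothesis Hv0 : forall k, 0 <= v k.
Hypothesis Hv : forall j : nat, (1 <= j)%nat -> exists C, 0 <= C /\ forall k, v k <= C * Wt M (INR j) (INR j) k.

Definition pv (x : cseq) := supS (fun k => Cmod (x k) * v k).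

Lemma pv_bounded x : inLambda M x -> exists B, forall k, Cmod (x k) * v k <= B.
Proof.
  intros Hx. destruct (inLambda_step M HW x Hx) as [j [B [Hj HB]]].
  destruct (Hv j Hj) as [C [HC HCv]]. exists (C * B). intros k.
  assert (Hj0 := INR_pos_ge1 j Hj).
  assert (H1 := wbound_Wt M _ _ _ _ k Hj0 Hj0 HB).
  assert (Hx0 := Cmod_ge_0 (x k)).
  apply Rle_trans with (Cmod (x k) * (C * Wt M (INR j) (INR j) k)).
  - apply Rmult_le_compat_l; auto.
  - replace (Cmod (x k) * (C * Wt M (INR j) (INR j) k)) with (C * (Cmod (x k) * Wt M (INR j) (INR j) k)) by ring.
    apply Rmult_le_compat_l; auto.
Qed.

Lemma pv_ub x k : inLambda M x -> Cmod (x k) * v k <= pv x.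
Proof. intros Hx. apply (sup_ub (fun k => Cmod (x k) * v k)), pv_bounded; auto. Qed.

Lemma pv_cont : cont_seminorm M pv.
Proof.
  split; [split; [|split]|].
  - intros x Hx. eapply Rle_trans; [|apply (pv_ub x 0 Hx)].
    apply Rmult_le_pos; [apply Cmod_ge_0|auto].
  - intros x y Hx Hy. apply sup_le. intros k.
    eapply Rle_trans. { apply Rmult_le_compat_r; [auto|apply Cmod_triangle]. }
    rewrite Rmult_plus_distr_r. apply Rplus_le_compat; apply pv_ub; auto.
  - intros a x Hx. apply Rle_antisym.
    + apply sup_le. intros k. rewrite Cmod_mult, Rmult_assoc.
      apply Rmult_le_compat_l; [apply Cmod_ge_0|]. apply pv_ub; auto.
    + destruct (Req_dec (Cmod a) 0) as [h|h].
      * rewrite h, Rmult_0_l. eapply Rle_trans; [|apply (pv_ub _ 0 (scal_inLambda M a x Hx))].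
        apply Rmult_le_pos; [apply Cmod_ge_0|auto].
      * assert (Ha : 0 < Cmod a) by (generalize (Cmod_ge_0 a); lra).
        assert (pv x <= pv (fun k => Cmult a (x k)) / Cmod a).
        { apply sup_le. intros k. apply (Rmult_le_reg_l (Cmod a)); auto.
          replace (Cmod a * (pv (fun k0 : nat => Cmult a (x k0)) / Cmod a)) with (pv (fun k0 : nat => Cmult a (x k0))) by (field; lra).
          rewrite <- Rmult_assoc, <- Cmod_mult. apply (pv_ub (fun k0 => Cmult a (x k0))). apply scal_inLambda; auto. }
        apply (Rmult_le_compat_l (Cmod a)) in H; [|lra].
        replace (Cmod a * (pv (fun k0 : nat => Cmult a (x k0)) / Cmod a)) with (pv (fun k0 : nat => Cmult a (x k0))) in H by (field; lra).
        lra.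
  - intros j Hj. destruct (Hv j Hj) as [C [HC HCv]]. exists C. intros c B HB.
    assert (Hj0 := INR_pos_ge1 j Hj).
    apply sup_le. intros k.
    assert (H1 := wbound_Wt M _ _ _ _ k Hj0 Hj0 HB).
    assert (Hx0 := Cmod_ge_0 (c k)).
    apply Rle_trans with (Cmod (c k) * (C * Wt M (INR j) (INR j) k)).
    + apply Rmult_le_compat_l; auto.
    + replace (Cmod (c k) * (C * Wt M (INR j) (INR j) k)) with (C * (Cmod (c k) * Wt M (INR j) (INR j) k)) by ring.
      apply Rmult_le_compat_l; auto.
Qed.

Lemma stepA : Lambda_nuclear M -> forall j : nat, (1 <= j)%nat ->
  exists S, forall N, fsum (fun k => v k / Wt M (INR j) (INR j) k) N <= S.
Proof.
  intros Hnuc j Hj.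
  destruct (Hnuc pv pv_cont) as [q [f [cn [Hq [Hlin [Hc0 [Hcex [Hfq Hpf]]]]]]]].
  destruct Hq as [_ Hqc]. destruct (Hqc j Hj) as [Cq HCq].
  assert (Hj0 := INR_pos_ge1 j Hj).
  set (W := fun k => Wt M (INR j) (INR j) k).
  assert (HWp : forall k, 0 < W k) by (intros; apply Wpos; auto).
  exists (Series (fun n => cn n * Cq)). intros N.
  set (g := fun k n => Cmod (f n (ev k)) * / W k).
  assert (Hgex : forall k, ex_series (g k)).
  { intros k. apply ex_series_scal_r. apply (Hpf (ev k) (evL k)). }
  destruct (swap_fsum_Series g N Hgex) as [Hex Heq].
  apply Rle_trans with (fsum (fun k => Series (g k)) N).
  { apply fsum_le. intros k _. unfold g. rewrite Series_scal_r. unfold Rdiv.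
    apply Rmult_le_compat_r; [apply Rlt_le, Rinv_0_lt_compat; auto|].
    apply Rle_trans with (pv (ev k)).
    - generalize (pv_ub (ev k) k (evL k)). unfold ev. rewrite Nat.eqb_refl, Cmod_1. lra.
    - apply (Hpf (ev k) (evL k)). }
  rewrite Heq. apply Series_le; [|apply ex_series_scal_r; auto].
  intros n. split.
  { apply fsum_nonneg. intros k. unfold g. apply Rmult_le_pos; [apply Cmod_ge_0|]. apply Rlt_le, Rinv_0_lt_compat; auto. }
  set (a := fun k => Cmult (phase (f n (ev k))) (RtoC (/ W k))).
  set (y := lc a N).
  assert (Hy : f n y = RtoC (fsum (fun k => g k n) N)).
  { apply lin_real; auto. intros k. unfold a, g.
    transitivity (Cmult (Cmult (phase (f n (ev k))) (f n (ev k))) (RtoC (/ W k))); [ring|].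
    rewrite phase_mul, <- RtoC_mult. auto. }
  assert (Hyw : wbound (M (INR j)) (INR j) y 1).
  { intros k p. unfold y, lc. destruct (Nat.ltb k N).
    - unfold a. rewrite Cmod_mult, Cmod_RtoC_pos by (apply Rlt_le, Rinv_0_lt_compat; auto).
      assert (Ht := Wub (INR j) (INR j) k p Hj0 Hj0). fold (W k) in Ht.
      assert (Ht0 := tnn (INR j) (INR j) k p Hj0 Hj0).
      change ((sqrt (INR k) / INR j) ^ p / M (INR j) p) with (term M (INR j) (INR j) k p).
      assert (Hph := phase_mod (f n (ev k))). assert (Hph0 := Cmod_ge_0 (phase (f n (ev k)))).
      assert (HWk := HWp k).
      assert (/ W k * term M (INR j) (INR j) k p <= 1).
      { apply (Rmult_le_reg_l (W k)); auto. rewrite <- Rmult_assoc, Rinv_r by lra. lra. }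
      assert (0 <= / W k * term M (INR j) (INR j) k p) by (apply Rmult_le_pos; auto; apply Rlt_le, Rinv_0_lt_compat; auto).
      rewrite Rmult_assoc. nra.
    - rewrite Cmod_0, Rmult_0_l. lra. }
  assert (HyL : inLambda M y) by apply lcL.
  assert (H1 := Hfq n y HyL). rewrite Hy, Cmod_RtoC_pos in H1.
  2:{ apply fsum_nonneg. intros k. unfold g. apply Rmult_le_pos; [apply Cmod_ge_0|]. apply Rlt_le, Rinv_0_lt_compat; auto. }
  eapply Rle_trans; [apply H1|]. apply Rmult_le_compat_l; auto.
  specialize (HCq y 1 Hyw). lra.
Qed.

End StepA.

End Dir1.

Fixpoint iterN (nx : nat -> nat -> nat) (m : nat) : nat :=
  match m with O => O | S m' => nx m' (iterN nx m') end.

Fixpoint Jf (Nf : nat -> nat) (k : nat) : nat :=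
  match k with
  | O => O
  | S k' => if Nat.leb (Nf (S (Jf Nf k'))) (S k') then S (Jf Nf k') else Jf Nf k'
  end.

Section Blocks.
Variable Nf : nat -> nat.
Hypothesis HN0 : Nf 0%nat = 0%nat.
Hypothesis HNinc : forall m, (Nf m < Nf (S m))%nat.

Lemma Nf_mono m m' : (m <= m')%nat -> (Nf m <= Nf m')%nat.
Proof. induction 1; auto. specialize (HNinc m0); lia. Qed.

Lemma Jf_inv k : (Nf (Jf Nf k) <= k < Nf (S (Jf Nf k)))%nat.
Proof.
  induction k; simpl.
  - rewrite HN0. specialize (HNinc 0%nat). lia.
  - destruct (Nat.leb_spec (Nf (S (Jf Nf k))) (S k)) as [h|h].
    + specialize (HNinc (S (Jf Nf k))). lia.
    + lia.
Qed.

Lemma Jf_block m k : (Nf m <= k < Nf (S m))%nat -> Jf Nf k = m.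
Proof.
  intros Hk. destruct (Jf_inv k) as [H1 H2].
  destruct (lt_eq_lt_dec (Jf Nf k) m) as [[h|h]|h]; auto.
  - assert (Nf (S (Jf Nf k)) <= Nf m)%nat by (apply Nf_mono; lia). lia.
  - assert (Nf (S m) <= Nf (Jf Nf k))%nat by (apply Nf_mono; lia). lia.
Qed.

Lemma Jf_ge j k : (Nf j <= k)%nat -> (j <= Jf Nf k)%nat.
Proof.
  intros Hk. destruct (Jf_inv k) as [H1 H2].
  destruct (le_lt_dec j (Jf Nf k)) as [h|h]; auto.
  assert (Nf (S (Jf Nf k)) <= Nf j)%nat by (apply Nf_mono; lia). lia.
Qed.
End Blocks.

Lemma fsum_diff_ext g g' a b : (a <= b)%nat -> (forall k, (a <= k < b)%nat -> g k = g' k) ->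
  fsum g b - fsum g a = fsum g' b - fsum g' a.
Proof.
  induction 1 as [|m Hm IH]; intros H; [lra|]. simpl. rewrite (H m) by lia.
  assert (fsum g m - fsum g a = fsum g' m - fsum g' a) by (apply IH; intros; apply H; lia). lra.
Qed.

Lemma fsum_block_ge g c a b : (a <= b)%nat -> (forall k, (a <= k < b)%nat -> c <= g k) ->
  INR (b - a) * c <= fsum g b - fsum g a.
Proof.
  induction 1 as [|m Hm IH]; intros H. { rewrite Nat.sub_diag. simpl. lra. }
  cbn [fsum]. replace (S m - a)%nat with (S (m - a)) by lia. rewrite S_INR.
  assert (INR (m - a) * c <= fsum g m - fsum g a) by (apply IH; intros; apply H; lia).
  specialize (H m ltac:(lia)). lra.
Qed.

Section Dir1b.
Variable M : wmatrix.
Hypothesis HW : is_weight_matrix M.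
Hypothesis Hlim : forall lam, 0 < lam ->
     is_lim_seq (fun p : nat => Rpower (M lam p) (/ INR p)) p_infty.

Let Wub := Wt_ub M HW Hlim.
Let Wge1 := Wt_ge1 M HW Hlim.
Let Wmono := Wt_mono M HW Hlim.
Let WmonoK := Wt_mono_k M HW Hlim.
Let Wpos := Wt_pos M HW Hlim.

Lemma stepB : Lambda_nuclear M -> forall lam, 0 < lam ->
  exists j : nat, (1 <= j)%nat /\ exists S, forall N,
    fsum (fun k => Wt M (INR j) (INR j) k / Wt M lam 1 k) N <= S.
Proof.
  intros Hnuc lam Hl.
  set (r := fun (j : nat) k => Wt M (INR j) (INR j) k / Wt M lam 1 k).
  assert (Hr0 : forall j k, (1 <= j)%nat -> 0 <= r j k).
  { intros j k Hj. unfold r. apply Rlt_le, Rdiv_lt_0_compat; apply Wpos; try lra; apply INR_pos_ge1; auto. }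
  apply NNPP. intros Hneg.
  assert (Hunb : forall m N0, exists N, (N0 < N)%nat /\ fsum (r (S m)) N0 + 1 <= fsum (r (S m)) N).
  { intros m N0.
    assert (exists N, fsum (r (S m)) N0 + 1 < fsum (r (S m)) N) as [N HN].
    { apply NNPP. intros H. apply Hneg. exists (S m). split; [lia|].
      exists (fsum (r (S m)) N0 + 1). intros N. apply Rnot_lt_le. intros H2. apply H. exists N. auto. }
    exists N. split; [|lra].
    destruct (le_lt_dec N N0) as [h|h]; auto.
    assert (fsum (r (S m)) N <= fsum (r (S m)) N0) by (apply fsum_mono; auto; intros; apply Hr0; lia). lra. }
  set (nx := fun m N0 => proj1_sig (constructive_indefinite_description _ (Hunb m N0))).
  assert (Hnx : forall m N0, (N0 < nx m N0)%nat /\ fsum (r (S m)) N0 + 1 <= fsum (r (S m)) (nx m N0)).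
  { intros m N0. unfold nx. destruct (constructive_indefinite_description _ (Hunb m N0)); auto. }
  set (Nf := iterN nx).
  assert (HN0 : Nf 0%nat = 0%nat) by reflexivity.
  assert (HNinc : forall m, (Nf m < Nf (S m))%nat).
  { intros m. unfold Nf. simpl. apply Hnx. }
  set (v := fun k => Wt M (INR (S (Jf Nf k))) (INR (S (Jf Nf k))) k).
  assert (Hv0 : forall k, 0 <= v k).
  { intros k. unfold v. apply Rlt_le, Wpos; apply INR_pos_ge1; lia. }
  assert (Hv : forall j : nat, (1 <= j)%nat -> exists C, 0 <= C /\ forall k, v k <= C * Wt M (INR j) (INR j) k).
  { intros j Hj. assert (Hj0 := INR_pos_ge1 j Hj).
    set (h1 := fun k => Wt M (INR 1) (INR 1) k / Wt M (INR j) (INR j) k).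
    assert (Hh1 : forall k, 0 <= h1 k).
    { intros k. unfold h1. apply Rlt_le, Rdiv_lt_0_compat; apply Wpos; simpl; lra. }
    exists (1 + fsum h1 (Nf j)). split; [generalize (fsum_nonneg h1 (Nf j) Hh1); lra|].
    intros k. assert (HWj := Wpos (INR j) (INR j) k Hj0 Hj0).
    destruct (le_lt_dec (Nf j) k) as [hk|hk].
    - assert (HJ := Jf_ge Nf HN0 HNinc j k hk).
      assert (v k <= Wt M (INR j) (INR j) k).
      { unfold v. apply Wmono; auto; apply le_INR; lia. }
      generalize (fsum_nonneg h1 (Nf j) Hh1). nra.
    - assert (v k <= Wt M (INR 1) (INR 1) k).
      { unfold v. change (INR 1) with 1. assert (1 <= INR (S (Jf Nf k))) by (apply INR_ge1; lia).
        apply Wmono; lra. }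
      assert (h1 k <= fsum h1 (Nf j)) by (apply fsum_term; auto).
      assert (Wt M (INR 1) (INR 1) k = h1 k * Wt M (INR j) (INR j) k) by (unfold h1; field; lra).
      nra. }
  destruct (nat_ge1 (Rmax lam 1)) as [j0 [Hj0 Hj0r]].
  generalize (Rmax_l lam 1) (Rmax_r lam 1); intros Hm1 Hm2.
  destruct (stepA M HW Hlim v Hv0 Hv Hnuc j0 Hj0) as [Sb HS].
  assert (Hup : forall N, fsum (fun k => v k / Wt M lam 1 k) N <= Sb).
  { intros N. eapply Rle_trans; [|apply (HS N)]. apply fsum_le. intros k _.
    unfold Rdiv. apply Rmult_le_compat_l; auto.
    apply Rinv_le_contravar; [apply Wpos; lra|]. apply Wmono; lra. }
  assert (Hlow : forall m, INR m <= fsum (fun k => v k / Wt M lam 1 k) (Nf m)).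
  { induction m. { rewrite HN0. simpl. lra. }
    assert (Hd := fsum_diff_ext (fun k => v k / Wt M lam 1 k) (r (S m)) (Nf m) (Nf (S m))
       ltac:(specialize (HNinc m); lia)).
    assert (Hd2 : fsum (fun k => v k / Wt M lam 1 k) (Nf (S m)) - fsum (fun k => v k / Wt M lam 1 k) (Nf m)
       = fsum (r (S m)) (Nf (S m)) - fsum (r (S m)) (Nf m)).
    { apply Hd. intros k Hk. unfold v, r. rewrite (Jf_block Nf HN0 HNinc m k Hk). auto. }
    destruct (Hnx m (Nf m)) as [_ Hb].
    assert (HNS : Nf (S m) = nx m (Nf m)) by reflexivity.
    rewrite <- HNS in Hb. rewrite S_INR. lra. }
  destruct (nat_gt Sb) as [m Hm]. specialize (Hlow m). specialize (Hup (Nf m)). lra.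
Qed.

End Dir1b.

Section Dir1c.
Variable M : wmatrix.
Hypothesis HW : is_weight_matrix M.
Hypothesis Hlim : forall lam, 0 < lam ->
     is_lim_seq (fun p : nat => Rpower (M lam p) (/ INR p)) p_infty.
Hypothesis Hlc : forall lam, 0 < lam -> forall p : nat, (1 <= p)%nat ->
     (M lam p) ^ 2 <= M lam (p - 1)%nat * M lam (p + 1)%nat.

Let Wub := Wt_ub M HW Hlim.
Let Wge1 := Wt_ge1 M HW Hlim.
Let Wmono := Wt_mono M HW Hlim.
Let WmonoK := Wt_mono_k M HW Hlim.
Let Wpos := Wt_pos M HW Hlim.
Let Mp := Mpos M HW.

Lemma mu_step lam r : 0 < lam -> M lam (S r) / M lam r <= M lam (S (S r)) / M lam (S r).
Proof.
  intros Hl. assert (H := Hlc lam Hl (S r) ltac:(lia)).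
  replace (S r - 1)%nat with r in H by lia. replace (S r + 1)%nat with (S (S r)) in H by lia.
  assert (Ha := Mp lam r Hl). assert (Hb := Mp lam (S r) Hl). assert (Hc := Mp lam (S (S r)) Hl).
  apply (Rmult_le_reg_r (M lam r * M lam (S r))); [nra|].
  replace (M lam (S r) / M lam r * (M lam r * M lam (S r))) with (M lam (S r) ^ 2) by (field; lra).
  replace (M lam (S (S r)) / M lam (S r) * (M lam r * M lam (S r))) with (M lam r * M lam (S (S r))) by (field; lra).
  lra.
Qed.

Lemma mu_mono lam a b : 0 < lam -> (a <= b)%nat -> M lam (S a) / M lam a <= M lam (S b) / M lam b.
Proof.
  intros Hl. induction 1; [lra|]. eapply Rle_trans; [apply IHle|]. apply mu_step; auto.
Qed.

Lemma g_up lam s r : 0 < lam -> 0 <= s -> M lam (S r) / M lam r <= s ->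
  s ^ r / M lam r <= s ^ S r / M lam (S r).
Proof.
  intros Hl Hs H. assert (Ha := Mp lam r Hl). assert (Hb := Mp lam (S r) Hl).
  assert (Hu : 0 <= s ^ r) by (apply pow_le; auto).
  assert (H' : M lam (S r) <= s * M lam r).
  { apply (Rmult_le_compat_r (M lam r)) in H; [|lra].
    replace (M lam (S r) / M lam r * M lam r) with (M lam (S r)) in H by (field; lra). lra. }
  apply (Rmult_le_reg_r (M lam r * M lam (S r))); [nra|].
  replace (s ^ r / M lam r * (M lam r * M lam (S r))) with (s ^ r * M lam (S r)) by (field; lra).
  replace (s ^ S r / M lam (S r) * (M lam r * M lam (S r))) with (s ^ r * (s * M lam r)) by (simpl; field; lra).
  apply Rmult_le_compat_l; auto.
Qed.

Lemma g_down lam s r : 0 < lam -> 0 <= s -> s <= M lam (S r) / M lam r ->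
  s ^ S r / M lam (S r) <= s ^ r / M lam r.
Proof.
  intros Hl Hs H. assert (Ha := Mp lam r Hl). assert (Hb := Mp lam (S r) Hl).
  assert (Hu : 0 <= s ^ r) by (apply pow_le; auto).
  assert (H' : s * M lam r <= M lam (S r)).
  { apply (Rmult_le_compat_r (M lam r)) in H; [|lra].
    replace (M lam (S r) / M lam r * M lam r) with (M lam (S r)) in H by (field; lra). lra. }
  apply (Rmult_le_reg_r (M lam r * M lam (S r))); [nra|].
  replace (s ^ r / M lam r * (M lam r * M lam (S r))) with (s ^ r * M lam (S r)) by (field; lra).
  replace (s ^ S r / M lam (S r) * (M lam r * M lam (S r))) with (s ^ r * (s * M lam r)) by (simpl; field; lra).
  apply Rmult_le_compat_l; auto.
Qed.

Lemma maxterm lam p r : 0 < lam ->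
  (M lam (S p) / M lam p) ^ r / M lam r <= (M lam (S p) / M lam p) ^ S p / M lam (S p).
Proof.
  intros Hl. set (s := M lam (S p) / M lam p).
  assert (Hs : 0 <= s) by (unfold s; apply Rlt_le, Rdiv_lt_0_compat; apply Mp; auto).
  destruct (le_lt_dec r (S p)) as [hr|hr].
  - assert (Hup : forall n r, (r + n = S p)%nat -> s ^ r / M lam r <= s ^ S p / M lam (S p)).
    { induction n; intros r' Hr'.
      - replace r' with (S p) by lia. lra.
      - eapply Rle_trans; [|apply (IHn (S r')); lia].
        apply g_up; auto. apply mu_mono; auto; lia. }
    apply (Hup (S p - r)%nat r); lia.
  - assert (Hdn : forall n, s ^ (S p + n)%nat / M lam (S p + n)%nat <= s ^ S p / M lam (S p)).
    { induction n. { rewrite Nat.add_0_r; lra. }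
      eapply Rle_trans; [|apply IHn]. replace (S p + S n)%nat with (S (S p + n))%nat by lia.
      apply g_down; auto. apply mu_mono; auto; lia. }
    replace r with (S p + (r - S p))%nat by lia. apply Hdn.
Qed.


Lemma stepC lam (j : nat) Sb : 0 < lam -> (1 <= j)%nat ->
  (forall N, fsum (fun k => Wt M (INR j) (INR j) k / Wt M lam 1 k) N <= Sb) ->
  forall K, INR K * Wt M (INR j) (INR j) K <= Sb * Wt M lam 1 (K + K).
Proof.
  intros Hl Hj HS K. assert (Hj0 := INR_pos_ge1 j Hj).
  set (r := fun k => Wt M (INR j) (INR j) k / Wt M lam 1 k).
  assert (Hr0 : forall k, 0 <= r k) by (intros; apply Rlt_le, Rdiv_lt_0_compat; apply Wpos; lra).
  assert (HB := fsum_block_ge r (Wt M (INR j) (INR j) K / Wt M lam 1 (K + K)) K (K + K) ltac:(lia)).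
  assert (Hi : INR (K + K - K) * (Wt M (INR j) (INR j) K / Wt M lam 1 (K + K)) <= fsum r (K + K) - fsum r K).
  { apply HB. intros k Hk. unfold r, Rdiv. apply Rmult_le_compat.
    - apply Rlt_le, Wpos; lra.
    - apply Rlt_le, Rinv_0_lt_compat, Wpos; lra.
    - apply WmonoK; lia || lra.
    - apply Rinv_le_contravar; [apply Wpos; lra|]. apply WmonoK; lia || lra. }
  replace (K + K - K)%nat with K in Hi by lia.
  assert (fsum r (K + K) <= Sb) by apply HS.
  assert (0 <= fsum r K) by (apply fsum_nonneg; auto).
  assert (HWi := Wpos lam 1 (K + K) Hl ltac:(lra)).
  assert (INR K * (Wt M (INR j) (INR j) K / Wt M lam 1 (K + K)) <= Sb) by lra.
  apply (Rmult_le_compat_r (Wt M lam 1 (K + K))) in H1; [|lra].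
  replace (INR K * (Wt M (INR j) (INR j) K / Wt M lam 1 (K + K)) * Wt M lam 1 (K + K))
    with (INR K * Wt M (INR j) (INR j) K) in H1 by (field; lra).
  lra.
Qed.


Lemma floor_nat (t : R) : 0 <= t -> exists K : nat, INR K <= t /\ t - 1 < INR K.
Proof.
  intros Ht. destruct (base_Int_part t) as [H1 H2].
  assert (Hz : (0 <= Int_part t)%Z).
  { assert (IZR (-1) < IZR (Int_part t)) by lra. apply lt_IZR in H. lia. }
  exists (Z.to_nat (Int_part t)). rewrite INR_IZR_INZ, Z2Nat.id by auto. lra.
Qed.

Lemma stepD lam (j : nat) Sb : 0 < lam -> (1 <= j)%nat -> lam <= INR j -> 0 <= Sb ->
  (forall K, INR K * Wt M (INR j) (INR j) K <= Sb * Wt M lam 1 (K + K)) ->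
  forall p, M lam (S p) <= ((2 + 2 * Sb) * (2 * INR j)) ^ (S p) * M (INR j) p.
Proof.
  intros Hl Hj Hlj HS HC p. assert (Hj0 := INR_pos_ge1 j Hj). assert (Hj1 := INR_ge1 j Hj).
  set (A := (2 + 2 * Sb) * (2 * INR j)).
  set (X := M lam (S p)). set (Y := M (INR j) p). set (Mlp := M lam p).
  assert (HX : 0 < X) by (apply Mp; auto). assert (HY : 0 < Y) by (apply Mp; lra).
  assert (HM : 0 < Mlp) by (apply Mp; auto).
  assert (HMY : Mlp <= Y) by (apply Mmono; auto).
  set (w := (2 * INR j) ^ p).
  assert (Hw1 : 1 <= w) by (apply pow_R1_Rle; lra).
  assert (HA : (2 + 2 * Sb) * w <= A ^ S p).
  { unfold A. rewrite Rpow_mult_distr. apply Rmult_le_compat; try lra.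
    - rewrite <- (pow_1 (2 + 2 * Sb)) at 1. apply Rle_pow; [lra|lia].
    - unfold w. apply Rle_pow; [lra|lia]. }
  assert (Hgoal : X <= (2 + 2 * Sb) * w * Y -> X <= A ^ S p * Y).
  { intros H. eapply Rle_trans; [apply H|]. apply Rmult_le_compat_r; lra. }
  apply Hgoal.
  set (s := X / Mlp). assert (Hs0 : 0 < s) by (apply Rdiv_lt_0_compat; auto).
  assert (HXs : X = s * Mlp) by (unfold s; field; lra).
  destruct (Rlt_or_le s 2) as [hs|hs].
  - assert (X <= 2 * Y) by nra.
    assert (2 <= (2 + 2 * Sb) * w) by nra. nra.
  - destruct (floor_nat (s ^ 2 / 2)) as [K [HK1 HK2]]. { apply Rmult_le_pos; [apply pow_le; lra|lra]. }
    assert (HK4 : s ^ 2 / 4 <= INR K) by (simpl in *; nra).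
    assert (HKpos : 1 <= INR K) by (simpl in *; nra).
    assert (H2K : INR (K + K) <= s ^ 2) by (rewrite plus_INR; lra).
    assert (Hsq : sqrt (INR (K + K)) <= s).
    { rewrite <- (sqrt_pow2 s) by lra. apply sqrt_le_1_alt; auto. }
    assert (HsqK : s / 2 <= sqrt (INR K)).
    { rewrite <- (sqrt_pow2 (s / 2)) by lra. apply sqrt_le_1_alt. simpl in *. nra. }
    assert (HWi : Wt M lam 1 (K + K) <= s ^ S p / X).
    { apply Wt_le. intros r. unfold term.
      eapply Rle_trans; [|apply (maxterm lam p r Hl)].
      fold X Mlp s. unfold Rdiv. apply Rmult_le_compat_r; [apply Rlt_le, Rinv_0_lt_compat, Mp; auto|].
      apply pow_incr. split; [apply Rmult_le_pos; [apply sqrt_pos|lra]|]. rewrite Rinv_1, Rmult_1_r. auto. }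
    assert (HWj : term M (INR j) (INR j) K p <= Wt M (INR j) (INR j) K) by (apply Wub; lra).
    assert (Hterm : (s / (2 * INR j)) ^ p / Y <= term M (INR j) (INR j) K p).
    { unfold term. fold Y. unfold Rdiv at 1 3. apply Rmult_le_compat_r; [apply Rlt_le, Rinv_0_lt_compat; auto|].
      apply pow_incr. split; [apply Rlt_le, Rdiv_lt_0_compat; lra|].
      replace (s / (2 * INR j)) with ((s / 2) / INR j) by (field; lra).
      unfold Rdiv. apply Rmult_le_compat_r; [apply Rlt_le, Rinv_0_lt_compat; auto|]. auto. }
    assert (Hmain : s ^ 2 / 4 * ((s / (2 * INR j)) ^ p / Y) <= Sb * (s ^ S p / X)).
    { eapply Rle_trans; [|apply Rmult_le_compat_l; [auto|apply HWi]].
      eapply Rle_trans; [|apply HC].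
      apply Rmult_le_compat; auto.
      - apply Rmult_le_pos; [apply pow_le; lra|lra].
      - apply Rmult_le_pos; [apply pow_le; apply Rlt_le, Rdiv_lt_0_compat; lra|apply Rlt_le, Rinv_0_lt_compat; auto].
      - lra. }
    set (u := s ^ p). assert (Hu : 0 < u) by (apply pow_lt; lra).
    assert (Hw0 : 0 < w) by lra.
    replace ((s / (2 * INR j)) ^ p) with (u / w) in Hmain.
    2:{ unfold u, w. unfold Rdiv. rewrite (Rpow_mult_distr s). rewrite pow_inv. auto. }
    replace (s ^ S p) with (s * u) in Hmain by (unfold u; simpl; ring).
    assert (E2 : X * s <= 4 * Sb * w * Y).
    { apply (Rmult_le_compat_r (4 * w * Y * X / (s * u))) in Hmain.
      2:{ apply Rlt_le. apply Rdiv_lt_0_compat; [|nra]. repeat apply Rmult_lt_0_compat; lra. }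
      replace (s ^ 2 / 4 * (u / w / Y) * (4 * w * Y * X / (s * u))) with (X * s) in Hmain by (simpl; field; repeat split; lra).
      replace (Sb * (s * u / X) * (4 * w * Y * X / (s * u))) with (4 * Sb * w * Y) in Hmain by (field; repeat split; lra).
      auto. }
    assert (X * 2 <= 4 * Sb * w * Y) by nra.
    assert (0 <= w * Y) by nra. nra.
Qed.

End Dir1c.

Lemma dir1 (M : wmatrix) (HW : is_weight_matrix M)
  (Hlc : forall lam, 0 < lam -> forall p : nat, (1 <= p)%nat ->
     (M lam p) ^ 2 <= M lam (p - 1)%nat * M lam (p + 1)%nat)
  (Hlim : forall lam, 0 < lam ->
     is_lim_seq (fun p : nat => Rpower (M lam p) (/ INR p)) p_infty) :
  Lambda_nuclear M ->
   forall lam, 0 < lam ->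
     exists kap A, lam <= kap /\ 1 <= A /\
       forall p : nat, M lam (p + 1)%nat <= A ^ (p + 1) * M kap p.
Proof.
  intros Hnuc lam Hl.
  destruct (stepB M HW Hlim Hnuc lam Hl) as [j [Hj [Sb HS]]].
  destruct (nat_ge1 lam) as [j0 [Hj0 Hj0r]].
  set (j2 := Nat.max j j0).
  assert (Hj2 : (1 <= j2)%nat) by (unfold j2; lia).
  assert (Hjj2 : INR j <= INR j2) by (apply le_INR; unfold j2; lia).
  assert (Hj0j2 : INR j0 <= INR j2) by (apply le_INR; unfold j2; lia).
  assert (Hjpos := INR_pos_ge1 j Hj).
  assert (HS2 : forall N, fsum (fun k => Wt M (INR j2) (INR j2) k / Wt M lam 1 k) N <= Rmax Sb 0).
  { intros N. eapply Rle_trans; [|eapply Rle_trans; [apply (HS N)|apply Rmax_l]].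
    apply fsum_le. intros k _. unfold Rdiv. apply Rmult_le_compat_r.
    - apply Rlt_le, Rinv_0_lt_compat, (Wt_pos M HW Hlim); lra.
    - apply (Wt_mono M HW Hlim); lra. }
  assert (HC := stepC M HW Hlim lam j2 (Rmax Sb 0) Hl Hj2 HS2).
  assert (HD := stepD M HW Hlim Hlc lam j2 (Rmax Sb 0) Hl Hj2 ltac:(lra) (Rmax_r _ _) HC).
  exists (INR j2), ((2 + 2 * Rmax Sb 0) * (2 * INR j2)). split; [lra|]. split.
  - assert (1 <= INR j2) by (apply INR_ge1; auto). generalize (Rmax_r Sb 0). nra.
  - intros p. rewrite Nat.add_1_r. apply HD.
Qed.

Theorem theorem5p8 (M : wmatrix) :
  is_weight_matrix M ->
  (forall lam, 0 < lam -> forall p : nat, (1 <= p)%nat ->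
     (M lam p) ^ 2 <= M lam (p - 1)%nat * M lam (p + 1)%nat) ->
  (forall lam, 0 < lam ->
     is_lim_seq (fun p : nat => Rpower (M lam p) (/ INR p)) p_infty) ->
  (forall lam kap, 0 < lam -> lam <= kap -> forall p : nat, (1 <= p)%nat ->
     M lam p / M lam (p - 1)%nat <= M kap p / M kap (p - 1)%nat) ->
  (Lambda_nuclear M <->
   forall lam, 0 < lam ->
     exists kap A, lam <= kap /\ 1 <= A /\
       forall p : nat, M lam (p + 1)%nat <= A ^ (p + 1) * M kap p).
Proof.
  intros HW Hlc Hlim _. split.
  - apply dir1; auto.
  - intros Hcond. apply (dir2 M HW Hlim Hcond).
Qed.
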